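(* Let $\Omega$ be a Keplerian branch around ${\rm O}$ in the plane ${\rm O}xy$ with equation $r=\alpha x+\beta y+\gamma$, $\gamma>0$, which possesses a horizontal chord (two distinct points of $\Omega$ with the same ordinate). Then there is a unique triple $(\phi,M,N)\in\,]0,\pi[\times\mathbb{R}\times\,]0,+\infty[$ such that $\Omega$ is the image of the vertical branch $\Sigma$ with equation $r=My+N$ by the affine map $(x_1,y_1)\mapsto(x_3,y_3)$ defined by $x_1=x_3-M\frac{\cos\phi}{\sin\phi}y_3-N\cos\phi$, $y_1=\frac{1}{\sin\phi}y_3$.
   Context: In the Euclidean plane ${\rm O}xy$, $r=\sqrt{x^2+y^2}$. A Keplerian branch around ${\rm O}$ is the image of a solution of Newton's system $\ddot q=-q/\|q\|^3$ (extended through collisions by bouncing back along the same ray with the same energy). For $\gamma>0$, the set of points satisfying $r=\alpha x+\beta y+\gamma$ is an (irreducible) Keplerian branch around ${\rm O}$. *)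

(* Defs.v *)
From Stdlib Require Import Reals.
Open Scope R_scope.

Definition rad (x y : R) : R := sqrt (x ^ 2 + y ^ 2).

Definition kbranch (alpha beta gamma : R) (x y : R) : Prop :=
  rad x y = alpha * x + beta * y + gamma.

Definition vbranch (M N : R) (x y : R) : Prop := rad x y = M * y + N.

Definition has_horizontal_chord (P : R -> R -> Prop) : Prop :=
  exists x x' y, x <> x' /\ P x y /\ P x' y.

Definition is_image_of_vertical (P : R -> R -> Prop) (phi M N : R) : Prop :=
  forall x3 y3 : R,
    P x3 y3 <->
    exists x1 y1 : R,
      vbranch M N x1 y1 /\
      x1 = x3 - M * (cos phi / sin phi) * y3 - N * cos phi /\
      y1 = / sin phi * y3.

(* Main.v *)
Require Import Defs.
From Stdlib Require Import Reals Lra Psatz.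
Open Scope R_scope.

Lemma rad_eq x y w : 0 <= w -> x^2 + y^2 = w*w -> rad x y = w.
Proof. intros; unfold rad; apply sqrt_lem_1; nra. Qed.

Lemma rad_sq x y : rad x y * rad x y = x^2 + y^2 /\ 0 <= rad x y.
Proof. unfold rad; split; [apply sqrt_sqrt; nra | apply sqrt_pos]. Qed.

Lemma core c s M N x1 y1 : s <> 0 -> c^2 + s^2 = 1 ->
  (rad x1 y1 = M*y1+N <-> rad (x1 + c*(M*y1+N)) (s*y1) = (M*y1+N) + c*x1).
Proof.
  intros Hs Hcs. set (u := M*y1+N).
  assert (Hc : c*c <= 1) by nra.
  split; intro H.
  - destruct (rad_sq x1 y1) as [H1 H2]. rewrite H in H1, H2.
    apply rad_eq.
    + destruct (Rle_dec 0 (u + c*x1)) as [|Hn]; auto.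
      exfalso. assert (c*x1 < - u) by lra.
      assert ((c*x1)*(c*x1) > u*u) by nra.
      assert (x1*x1 <= u*u) by nra. nra.
    + nra.
  - destruct (rad_sq (x1 + c*u) (s*y1)) as [H1 H2]. rewrite H in H1, H2.
    assert (E : s^2 * (x1^2 + y1^2 - u*u) = 0) by nra.
    assert (s^2 <> 0) by (apply pow_nonzero; auto).
    assert (E2 : x1^2 + y1^2 = u*u).
    { apply Rmult_integral in E. destruct E as [E|E]; [contradiction|lra]. }
    apply rad_eq; auto.
    destruct (Rle_dec 0 u) as [|Hn]; auto. exfalso.
    assert (x1*x1 <= u*u) by nra.
    assert (c*x1 >= -u) by nra.
    assert ((c*x1)*(c*x1) >= u*u) by nra.
    assert (s^2 > 0) by nra.
    assert (c*c < 1) by nra.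
    assert (u*u > 0) by nra.
    assert ((c*c)*(x1*x1) <= (c*c)*(u*u)) by (apply Rmult_le_compat_l; nra).
    nra.
Qed.

Lemma img phi M N x3 y3 : 0 < phi < PI ->
  ((exists x1 y1 : R, vbranch M N x1 y1 /\
      x1 = x3 - M * (cos phi / sin phi) * y3 - N * cos phi /\
      y1 = / sin phi * y3)
   <-> kbranch (cos phi) (sin phi * M) (sin phi ^ 2 * N) x3 y3).
Proof.
  intros Hp. assert (Hs : 0 < sin phi) by (apply sin_gt_0; lra).
  assert (Hcs : cos phi ^ 2 + sin phi ^ 2 = 1) by (pose proof (sin2_cos2 phi); unfold Rsqr in *; lra).
  set (c := cos phi) in *. set (s := sin phi) in *.
  set (x1 := x3 - M * (c / s) * y3 - N * c). set (y1 := / s * y3).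
  assert (E1 : x1 + c*(M*y1+N) = x3) by (unfold x1, y1; field; lra).
  assert (E2 : s*y1 = y3) by (unfold y1; field; lra).
  assert (E3 : (M*y1+N) + c*x1 = c * x3 + s * M * y3 + s^2 * N).
  { unfold x1, y1. replace (s^2) with (1 - c^2) by lra. apply Rminus_diag_uniq. transitivity (M*y3*(1 - c^2 - s^2)/s); [field; lra|]. replace (1 - c^2 - s^2) with 0 by lra. field; lra. }
  pose proof (core c s M N x1 y1 ltac:(lra) Hcs) as K.
  rewrite E1, E2, E3 in K. unfold kbranch, vbranch.
  split.
  - intros [a [b [H [-> ->]]]]. fold x1 y1. apply K in H. rewrite H. ring.
  - intro H. exists x1, y1. split; [|split; reflexivity]. apply K. rewrite H; ring.
Qed.

Lemma chord a b g : 0 < g -> has_horizontal_chord (kbranch a b g) -> -1 < a < 1.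
Proof.
  intros Hg [x [x' [y [Hne [H1 H2]]]]]. unfold kbranch in *.
  destruct (rad_sq x y) as [R1 R2]. destruct (rad_sq x' y) as [R3 R4].
  set (r := rad x y) in *. set (r' := rad x' y) in *.
  assert (Hd : x - x' <> 0) by lra.
  assert (K : a * (r + r') = x + x').
  { apply Rmult_eq_reg_l with (x - x'); auto.
    transitivity ((r - r') * (r + r')); [rewrite H1, H2; ring|]. nra. }
  assert (P : (r*r')*(r*r') >= (x*x')*(x*x')) by (replace ((r*r')*(r*r')) with ((r*r)*(r'*r')) by ring; rewrite R1, R3; nra).
  assert (P2 : r*r' >= Rabs (x*x')).
  { destruct (Rle_dec (r*r') (Rabs (x*x'))) as [h|h]; [|lra].
    assert (Rabs (x*x') * Rabs(x*x') = (x*x')*(x*x')).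
    { rewrite <- Rabs_mult. rewrite Rabs_pos_eq; [ring|]. nra. }
    pose proof (Rabs_pos (x*x')). assert (0 <= r*r') by nra. destruct (Rle_lt_or_eq_dec _ _ h) as [h2|h2]; [|lra]. assert ((Rabs (x*x') - r*r')*(Rabs (x*x') + r*r') > 0) by (apply Rmult_lt_0_compat; lra). nra. }
  pose proof (Rle_abs (x*x')).
  assert (Q : (x+x')*(x+x') <= (r+r')*(r+r')) by nra.
  assert (Hp : r + r' > 0).
  { destruct (Req_dec x 0); [ assert (x' <> 0) by lra; nra | nra ]. }
  destruct (Rlt_dec (a*a) 1) as [h|h]; [nra|exfalso].
  assert (QQ : a*a*((r+r')*(r+r')) = (x+x')*(x+x')) by (rewrite <- K; ring).
  assert (HS : (r+r')*(r+r') > 0) by nra. assert (HZ : (a*a-1)*((r+r')*(r+r')) <= 0) by nra. assert (a*a <= 1). { destruct (Rle_dec (a*a) 1); auto. assert ((a*a-1)*((r+r')*(r+r')) > 0) by (apply Rmult_lt_0_compat; lra). lra. } assert (a*a = 1) by lra.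
  assert (y*y = 0) by nra.
  assert (y = 0) by nra. subst y.
  assert (Ha : a = 1 \/ a = -1) by nra.
  destruct Ha as [-> | ->]; nra.
Qed.

Lemma coef a b g a' b' g' : 0 < g -> -1 < a < 1 ->
  (forall x y, kbranch a b g x y <-> kbranch a' b' g' x y) ->
  a' = a /\ b' = b /\ g' = g.
Proof.
  intros Hg Ha H.
  assert (L : forall x y, kbranch a b g x y -> a*x+b*y+g = a'*x+b'*y+g').
  { intros x y K. pose proof K as K'. apply H in K'. unfold kbranch in *. lra. }
  assert (P1 : kbranch a b g (g/(1-a)) 0).
  { unfold kbranch. apply rad_eq.
    - apply Rle_trans with (g/(1-a)); [apply Rlt_le, Rdiv_lt_0_compat; lra | right; field; lra].
    - field; lra. }
  assert (P2 : kbranch a b g (-(g/(1+a))) 0).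
  { unfold kbranch. apply rad_eq.
    - apply Rle_trans with (g/(1+a)); [apply Rlt_le, Rdiv_lt_0_compat; lra | right; field; lra].
    - field; lra. }
  apply L in P1. apply L in P2.
  assert (E1 : (a - a') * (g/(1-a)) + (g - g') = 0) by lra.
  assert (E2 : (a - a') * (-(g/(1+a))) + (g - g') = 0) by lra.
  assert (D : g/(1-a) + g/(1+a) > 0).
  { pose proof (Rdiv_lt_0_compat g (1-a)). pose proof (Rdiv_lt_0_compat g (1+a)). lra. }
  assert (Ea : (a - a') * (g/(1-a) + g/(1+a)) = 0) by lra.
  apply Rmult_integral in Ea. destruct Ea as [Ea|Ea]; [|lra].
  assert (a' = a) by lra. subst a'.
  assert (g' = g) by nra. subst g'.
  split; [reflexivity|]. split; [|reflexivity].
  destruct (Rlt_dec b 1) as [hb|hb].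
  - assert (P3 : kbranch a b g 0 (g/(1-b))).
    { unfold kbranch. apply rad_eq.
      - apply Rle_trans with (g/(1-b)); [apply Rlt_le, Rdiv_lt_0_compat; lra | right; field; lra].
      - field; lra. }
    apply L in P3. assert ((b - b') * (g/(1-b)) = 0) by lra.
    pose proof (Rdiv_lt_0_compat g (1-b)). nra.
  - assert (P3 : kbranch a b g 0 (-(g/(1+b)))).
    { unfold kbranch. apply rad_eq.
      - apply Rle_trans with (g/(1+b)); [apply Rlt_le, Rdiv_lt_0_compat; lra | right; field; lra].
      - field; lra. }
    apply L in P3. assert ((b - b') * (g/(1+b)) = 0) by lra.
    pose proof (Rdiv_lt_0_compat g (1+b)). nra.
Qed.

Theorem lemma7 (alpha beta gamma : R) :
  0 < gamma ->
  has_horizontal_chord (kbranch alpha beta gamma) ->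
  exists phi M N : R,
    (0 < phi < PI /\ 0 < N /\
     is_image_of_vertical (kbranch alpha beta gamma) phi M N) /\
    (forall phi' M' N' : R,
       0 < phi' < PI -> 0 < N' ->
       is_image_of_vertical (kbranch alpha beta gamma) phi' M' N' ->
       phi' = phi /\ M' = M /\ N' = N).
Proof.
  intros Hg Hch. pose proof (chord _ _ _ Hg Hch) as Ha.
  set (phi := acos alpha).
  assert (Hp : 0 < phi < PI) by (apply acos_bound_lt; lra).
  assert (Hc : cos phi = alpha) by (apply cos_acos; lra).
  assert (Hs : 0 < sin phi) by (apply sin_gt_0; lra).
  exists phi, (beta / sin phi), (gamma / sin phi ^ 2).
  split; [split; [exact Hp| split]|].
  - apply Rdiv_lt_0_compat; [lra| apply pow_lt; lra].
  - intros x3 y3. rewrite (img phi _ _ x3 y3 Hp).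
    replace (sin phi * (beta / sin phi)) with beta by (field; lra).
    replace (sin phi ^ 2 * (gamma / sin phi ^ 2)) with gamma by (field; lra).
    rewrite Hc. tauto.
  - intros phi' M' N' Hp' HN' H'.
    assert (K : forall x y, kbranch alpha beta gamma x y <->
       kbranch (cos phi') (sin phi' * M') (sin phi' ^ 2 * N') x y).
    { intros x y. rewrite (H' x y). apply img; auto. }
    destruct (coef _ _ _ _ _ _ Hg Ha K) as [E1 [E2 E3]].
    assert (Ep : phi' = phi) by (apply cos_inj; lra).
    subst phi'. split; [reflexivity|].
    split; [rewrite <- E2 | rewrite <- E3]; field; lra.
Qed.
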